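(* Let $R$ be a ring, $P$ a discrete projective left $R$-module and $Q$ a discrete projective right $R$-module, and let $Q^*=\operatorname{Hom}_R(Q,R)$ carry the topology of pointwise convergence. Then every continuous $R$-linear map $Q^*\to P$ has finitely generated image.
   Context: The topology of pointwise convergence on $Q^*$ has as a base of neighborhoods of $0$ the annihilators of finitely generated submodules of $Q$; $P$ is discrete. *)

(* Defs.v *)
From HB Require Import structures.
From mathcomp Require Import all_boot all_order all_algebra.
Set Implicit Arguments.
Unset Strict Implicit.
Unset Printing Implicit Defensive.
Import GRing.Theory.
Local Open Scope ring_scope.

(* Left R-modules are [lmodType R]; right R-modules are [lmodType R^c]
   (for q : Q and r : R, the right action q.r is written (r : R^c) *: q). *)

Definition projective (S : pzRingType) (P : lmodType S) : Prop :=
  forall (M N : lmodType S) (g : {linear M -> N}) (h : {linear P -> N}),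
    (forall y : N, exists x : M, g x = y) ->
    exists k : {linear P -> M}, forall x : P, g (k x) = h x.

Record dual (R : pzRingType) (Q : lmodType R^c) := Dual {
  dfun :> Q -> R;
  dfunD : forall x y : Q, dfun (x + y) = dfun x + dfun y;
  dfunZ : forall (r : R) (x : Q), dfun ((r : R^c) *: x) = dfun x * r }.

Section DualOps.
Variables (R : pzRingType) (Q : lmodType R^c).

Lemma dual_add_D (f g : dual Q) (x y : Q) :
  f (x + y) + g (x + y) = (f x + g x) + (f y + g y).
Proof. by rewrite !dfunD addrACA. Qed.

Lemma dual_add_Z (f g : dual Q) (r : R) (x : Q) :
  f ((r : R^c) *: x) + g ((r : R^c) *: x) = (f x + g x) * r.
Proof. by rewrite !dfunZ mulrDl. Qed.

Definition dual_add (f g : dual Q) : dual Q :=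
  @Dual R Q (fun x => f x + g x) (dual_add_D f g) (dual_add_Z f g).

Lemma dual_scale_D (r : R) (f : dual Q) (x y : Q) :
  r * f (x + y) = r * f x + r * f y.
Proof. by rewrite dfunD mulrDr. Qed.

Lemma dual_scale_Z (r : R) (f : dual Q) (s : R) (x : Q) :
  r * f ((s : R^c) *: x) = (r * f x) * s.
Proof. by rewrite dfunZ mulrA. Qed.

Definition dual_scale (r : R) (f : dual Q) : dual Q :=
  @Dual R Q (fun x => r * f x) (dual_scale_D r f) (dual_scale_Z r f).

Definition in_span (s : seq Q) (q : Q) : Prop :=
  exists c : 'I_(size s) -> R^c, q = \sum_(i < size s) c i *: nth 0 s i.

Definition ann (s : seq Q) (h : dual Q) : Prop :=
  forall q : Q, in_span s q -> h q = 0.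

(* Topology of pointwise convergence on Q^*: U is open iff every f in U has
   a neighbourhood f + Ann(N) inside U, N a finitely generated submodule. *)
Definition pw_open (U : dual Q -> Prop) : Prop :=
  forall f : dual Q, U f ->
    exists s : seq Q, forall h : dual Q, ann s h -> U (dual_add f h).

End DualOps.

Definition dual_linear (R : pzRingType) (Q : lmodType R^c) (P : lmodType R)
    (phi : dual Q -> P) : Prop :=
  (forall f g : dual Q, phi (dual_add f g) = phi f + phi g) /\
  (forall (r : R) (f : dual Q), phi (dual_scale r f) = r *: phi f).

Definition continuous_discrete (R : pzRingType) (Q : lmodType R^c)
    (P : lmodType R) (phi : dual Q -> P) : Prop :=
  forall V : P -> Prop, pw_open (fun f => V (phi f)).

Definition fg_image (R : pzRingType) (Q : lmodType R^c) (P : lmodType R)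
    (phi : dual Q -> P) : Prop :=
  exists s : seq P, forall y : P,
    (exists f : dual Q, phi f = y) <->
    (exists c : 'I_(size s) -> R, y = \sum_(i < size s) c i *: nth 0 s i).

(* Main.v *)
Require Import Defs.
From mathcomp Require Import all_boot all_order all_algebra.
From HB Require Import structures.
From mathcomp Require Import all_boot all_order all_algebra finmap.
From mathcomp.multinomials Require Import monalg.
Set Implicit Arguments.
Unset Strict Implicit.
Unset Printing Implicit Defensive.
Import GRing.Theory.

Section Free.
Local Open Scope ring_scope.
Local Open Scope fset_scope.
Variables (R : pzRingType) (Q : lmodType R^c).

Definition FM := {malg R[Q]}.
HB.instance Definition _ := GRing.Zmodule.on FM.

Definition fmscale (c : R^c) (g : FM) : FM := [malg x in msupp g => (g@_x * (c : R))%R].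

Lemma fmscaleE c g x : (fmscale c g)@_x = g@_x * (c : R).
Proof.
rewrite /fmscale mcoeffE; case: msuppP => //; by rewrite mul0r.
Qed.

Lemma fmscaleA a b g : fmscale a (fmscale b g) = fmscale (a * b) g.
Proof. apply/malgP => x; rewrite !fmscaleE mulrA. done. Qed.
Lemma fmscale1 : left_id 1 fmscale.
Proof. move=> g; apply/malgP => x; rewrite !fmscaleE mulr1. done. Qed.
Lemma fmscaleDr : right_distributive fmscale +%R.
Proof. move=> c g h; apply/malgP => x; rewrite !(fmscaleE, mcoeffD) mulrDl. done. Qed.
Lemma fmscaleDl g : {morph fmscale^~ g : a b / (a + b)%R >-> (a + b)%R}.
Proof. move=> a b; apply/malgP => x; rewrite !(fmscaleE, mcoeffD) mulrDr. done. Qed.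

HB.instance Definition _ := GRing.Zmodule_isLmodule.Build R^c FM fmscaleA fmscale1 fmscaleDr fmscaleDl.

Lemma mcoeffZc (c : R^c) (g : FM) x : (c *: g)@_x = g@_x * (c : R).
Proof. exact: fmscaleE. Qed.

Definition gsum (m : FM) : Q := \sum_(k <- msupp m) (m@_k : R^c) *: k.

Lemma gsumEw (d : {fset Q}) m : msupp m `<=` d -> gsum m = \sum_(k <- d) (m@_k : R^c) *: k.
Proof.
move=> le; rewrite /gsum (big_fset_incl _ le) // => x xd /mcoeff_outdom ->.
by rewrite scale0r.
Qed.

Lemma gsum_lin : linear gsum.
Proof.
move=> a u v.
set d := msupp u `|` msupp v.
have hu : msupp u `<=` d by apply: fsubsetUl.
have hv : msupp v `<=` d by apply: fsubsetUr.
have huv : msupp (a *: u + v) `<=` d.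
  apply: fsubset_trans (msuppD_le _ _) _; apply: fsetSU.
  apply/fsubsetP => x; rewrite -!mcoeff_neq0 mcoeffZc.
  by apply: contraNN => /eqP ->; rewrite mul0r.
rewrite (gsumEw hu) (gsumEw hv) (gsumEw huv) scaler_sumr -big_split /=.
apply: eq_bigr => x _; rewrite mcoeffD mcoeffZc scalerDl scalerA. done.
Qed.

HB.instance Definition _ := GRing.isLinear.Build R^c FM Q _ gsum gsum_lin.

Lemma gsumU (q : Q) : gsum << (1 : R) *g q >> = q.
Proof.
by rewrite (gsumEw msuppU_le) big_seq_fset1 mcoeffUU scale1r.
Qed.


Lemma dual0 (f : dual Q) : f 0 = 0.
Proof. by rewrite -(scale0r (0 : Q)) dfunZ mulr0. Qed.

Lemma dual_sum (f : dual Q) (I : Type) (l : seq I) (G : I -> Q) :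
  f (\sum_(i <- l) G i) = \sum_(i <- l) f (G i).
Proof. exact: (big_morph f (dfunD f) (dual0 f)). Qed.

Lemma dual_basis_local (hQ : projective Q) (s : seq Q) :
  exists (X : seq Q) (d : Q -> dual Q),
    forall q, in_span s q -> q = \sum_(x <- X) (d x q : R^c) *: x.
Proof.
have [k hk] := hQ FM Q gsum idfun (fun y => ex_intro _ _ (gsumU y)).
have dD x : forall u v : Q, (k (u + v)%R)@_x = ((k u)@_x + (k v)@_x)%R.
  by move=> u v; rewrite linearD mcoeffD.
have dZ x : forall (r : R) (u : Q), (k ((r : R^c) *: u))@_x = (k u)@_x * r.
  by move=> r u; rewrite linearZ mcoeffZc.
pose d x := @Dual R Q (fun q => (k q)@_x) (dD x) (dZ x).
pose D := foldr (fun y D => msupp (k y) `|` D) fset0 s.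
have sD y : y \in s -> msupp (k y) `<=` D.
  rewrite /D; elim: s {D} => //= z s' IH; rewrite inE => /orP [/eqP ->|ys].
    exact: fsubsetUl.
  exact: fsubset_trans (IH ys) (fsubsetUr _ _).
exists D, d => q [c ->].
pose T q := \sum_(x <- D) ((k q)@_x : R^c) *: x.
have T0 : T 0 = 0 by rewrite /T big1 // => x _; rewrite linear0 mcoeff0 scale0r.
have TD u v : T (u + v)%R = (T u + T v)%R.
  by rewrite /T -big_split; apply: eq_bigr => x _; rewrite linearD mcoeffD scalerDl.
have TZ (a : R^c) u : T (a *: u) = a *: T u.
  rewrite /T scaler_sumr; apply: eq_bigr => x _; rewrite linearZ mcoeffZc scalerA //.
have Ts y : y \in s -> T y = y.
  move=> ys; rewrite /T -(gsumEw (sD y ys)); exact: hk.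
symmetry; apply: (big_ind (fun q => T q = q)) => //.
  by move=> u v hu hv; rewrite TD hu hv.
move=> i _; rewrite TZ Ts //; apply: mem_nth => //.
Qed.
End Free.
From Stdlib Require Import FunctionalExtensionality ProofIrrelevance.
Set Implicit Arguments.
Unset Strict Implicit.
Unset Printing Implicit Defensive.
Import GRing.Theory.

Section Main.
Local Open Scope ring_scope.
Variables (R : pzRingType) (Q : lmodType R^c).

Lemma dual_ext (f g : dual Q) : (forall x, f x = g x) -> f = g.
Proof.
case: f g => f fD fZ [g gD gZ] /= e.
have efg : f = g by apply: functional_extensionality.
subst g; congr Dual; apply: proof_irrelevance.
Qed.

Lemma dz_D (x y : Q) : (0 : R) = 0 + 0. Proof. by rewrite addr0. Qed.
Lemma dz_Z (r : R) (x : Q) : (0 : R) = 0 * r. Proof. by rewrite mul0r. Qed.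
Definition dzero : dual Q := @Dual R Q (fun _ => 0) dz_D dz_Z.

Definition dsum (l : seq (dual Q)) : dual Q := foldr (@dual_add R Q) dzero l.

Lemma dsumE l q : dsum l q = \sum_(g <- l) g q.
Proof. elim: l => [|g l IH] /=; first by rewrite big_nil. by rewrite big_cons IH. Qed.
End Main.

Local Open Scope ring_scope.
Theorem lemma3p1 (R : pzRingType) (P : lmodType R) (Q : lmodType R^c)
  (hP : projective P) (hQ : projective Q) (phi : dual Q -> P) :
  dual_linear phi -> continuous_discrete phi -> fg_image phi.
Proof.
move=> [phiD phiZ] cont.
have phi0 : phi (dzero Q) = 0.
  have -> : dzero Q = dual_scale 0 (dzero Q) by apply: dual_ext => x /=; rewrite mul0r.
  by rewrite phiZ scale0r.
have [s Hs] := cont (fun y => y = 0) (dzero Q) phi0.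
have Hann h : ann s h -> phi h = 0.
  move=> /Hs; suff -> : dual_add (dzero Q) h = h by [].
  by apply: dual_ext => x /=; rewrite add0r.
have phi_dsum (I : Type) (l : seq I) (F : I -> dual Q) :
    phi (dsum [seq F i | i <- l]) = \sum_(i <- l) phi (F i).
  elim: l => [|i l IH] /=; first by rewrite big_nil.
  by rewrite phiD IH big_cons.
have [X [d HX]] := dual_basis_local hQ s.
exists [seq phi (d x) | x <- X] => y; split.
  move=> [f <-].
  pose A := dsum [seq dual_scale (f x) (d x) | x <- X].
  have AE q : A q = \sum_(x <- X) f x * d x q.
    by rewrite dsumE big_map.
  pose h := dual_add f (dual_scale (-1) A).
  have hann : ann s h.
    move=> q /HX eq; rewrite /= AE mulN1r {1}eq dual_sum.
    rewrite (eq_bigr (fun x => f x * d x q)) ?subrr // => x _.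
    by rewrite dfunZ.
  have -> : f = dual_add A h.
    by apply: dual_ext => q /=; rewrite mulN1r addrC addrNK.
  rewrite phiD (Hann h hann) addr0 phi_dsum.
  exists (fun i => f (nth 0 X i)).
  rewrite (big_nth 0) big_mkord size_map; apply: eq_bigr => i _.
  by rewrite phiZ (nth_map 0).
move=> [c ->].
exists (dsum [seq dual_scale (c i) (d (nth 0 X i)) | i <- index_enum 'I_(size [seq phi (d x) | x <- X])]).
rewrite phi_dsum; apply: eq_bigr => i _.
rewrite phiZ (nth_map 0) //; have := ltn_ord i; rewrite [X in (_ < X)%N -> _]size_map; exact.
Qed.
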